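(* For every integer $k\geq 1$ there exist $n$ and a covering $k$-colouring of the edges of $K_n^{(3)}$ with no tricoloured $4$-set.
   Context: $K_n^{(3)}$ is the complete $3$-uniform hypergraph on $n$ vertices (edges are all $3$-subsets). A $3$-uniform hypergraph on vertex set $V$ is a covering if every $2$-subset of $V$ is contained in some edge. A $k$-colouring of the edges of $K_n^{(3)}$ is covering if for each colour, the $3$-graph on all $n$ vertices formed by the edges of that colour is a covering. A $4$-set of vertices is tricoloured if its four $3$-subsets receive exactly three distinct colours. *)

(* Defs.v *)
From mathcomp Require Import all_boot.
Set Implicit Arguments. Unset Strict Implicit. Unset Printing Implicit Defensive.

(* An edge-colouring of K_n^(3) with k colours: a map from subsets of 'I_n to
   colours 'I_k; only its values on 3-subsets (the edges) are relevant. *)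
Definition colouring (n k : nat) := {set 'I_n} -> 'I_k.

Definition covering_colouring (n k : nat) (c : colouring n k) : Prop :=
  forall (i : 'I_k) (x y : 'I_n), x != y ->
    exists z : 'I_n, #|[set x; y; z]| = 3 /\ c [set x; y; z] = i.

Definition tricoloured (n k : nat) (c : colouring n k) (S : {set 'I_n}) : Prop :=
  #|S| = 4 /\ #|[set c T | T in [set T in powerset S | #|T| == 3]]| = 3.

(* Main.v *)
Require Import Defs.
From mathcomp Require Import all_boot zify.
Set Implicit Arguments. Unset Strict Implicit. Unset Printing Implicit Defensive.

Definition P3 (p q r : nat) := (p = q /\ p < r) \/ (p = r /\ p < q) \/ (q = r /\ q < p).

Lemma logn_odd m e : odd m -> logn 2 (m * 2 ^ e) = e.
Proof.
move=> om; have m0 : 0 < m by case: m om.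
rewrite lognM ?expn_gt0 // pfactorK // logn_coprime ?coprime2n //.
Qed.

Lemma logn_ge m e : 0 < m -> ~~ odd m -> e < logn 2 (m * 2 ^ e).
Proof.
move=> m0 em; rewrite lognM ?expn_gt0 // pfactorK // addnC -addn1 leq_add2l.
by rewrite -(pfactor_dvdn 1 _ m0) // expn1 dvdn2.
Qed.

Lemma nu_add a b : 0 < a -> 0 < b -> P3 (logn 2 a) (logn 2 b) (logn 2 (a + b)).
Proof.
move=> a0 b0.
have [a' oa ea] := pfactor_coprime (isT : prime 2) a0.
have [b' ob eb] := pfactor_coprime (isT : prime 2) b0.
rewrite coprime2n in oa; rewrite coprime2n in ob.
set A := logn 2 a in ea *; set B := logn 2 b in eb *.
rewrite /P3.
have [AB|BA|AB] := ltngtP A B.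
- have -> : a + b = (a' + b' * 2 ^ (B - A)) * 2 ^ A.
    by rewrite ea eb mulnDl -mulnA -expnD subnK // ltnW.
  rewrite logn_odd; first by lia.
  rewrite oddD oddM oddX /= (_ : (B - A == 0) = false) ?oa //; lia.
- have -> : a + b = (a' * 2 ^ (A - B) + b') * 2 ^ B.
    by rewrite ea eb mulnDl -mulnA -expnD subnK // ltnW.
  rewrite logn_odd; first by lia.
  rewrite oddD oddM oddX /= (_ : (A - B == 0) = false) ?ob ?andbF //; lia.
- have H : A < logn 2 ((a' + b') * 2 ^ A).
    apply: logn_ge; first by case: a' oa {ea}.
    by rewrite oddD oa ob.
  have -> : a + b = (a' + b') * 2 ^ A by rewrite ea eb AB mulnDl.
  clearbody A B. subst B. lia.
Qed.
Definition lv (x y : nat) := logn 2 ((x - y) + (y - x)).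
Lemma lvC x y : lv x y = lv y x. Proof. by rewrite /lv addnC. Qed.
Lemma lv_ord x y z : x < y -> y < z -> P3 (lv x y) (lv y z) (lv x z).
Proof.
move=> xy yz.
have := nu_add (a := y - x) (b := z - y) ltac:(lia) ltac:(lia).
have e1 : x - y + (y - x) = y - x by lia.
have e2 : y - z + (z - y) = z - y by lia.
have e3 : x - z + (z - x) = y - x + (z - y) by lia.
by rewrite /lv e1 e2 e3.
Qed.
Lemma P3_12 p q r : P3 p q r -> P3 q p r. Proof. rewrite /P3; lia. Qed.
Lemma P3_23 p q r : P3 p q r -> P3 p r q. Proof. rewrite /P3; lia. Qed.
Lemma P3_13 p q r : P3 p q r -> P3 r q p. Proof. rewrite /P3; lia. Qed.

Lemma lv_P3 x y z : x != y -> y != z -> x != z -> P3 (lv x y) (lv y z) (lv x z).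
Proof.
move=> xy yz xz.
case: (ltngtP x y) xy => // h1 _; case: (ltngtP y z) yz => // h2 _;
case: (ltngtP x z) xz => // h3 _;
first [ have H := lv_ord h1 h2 | have H := lv_ord h2 h1 | have H := lv_ord h1 h3
 | have H := lv_ord h3 h1 | have H := lv_ord h2 h3 | have H := lv_ord h3 h2 | lia];
move: H (lvC x y) (lvC y z) (lvC x z); rewrite /P3; lia.
Qed.
Definition gv (u w : nat) := logn 2 (w - u).
Lemma gtri u v w : u < v -> v < w -> P3 (gv u v) (gv v w) (gv u w).
Proof.
move=> uv vw; have := nu_add (a := v - u) (b := w - v) ltac:(lia) ltac:(lia).
by rewrite /gv (_ : v - u + (w - v) = w - u) //; lia.
Qed.

Definition cv (p q r : nat) := logn 2 (maxn p (maxn q r) - minn p (minn q r)).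

Lemma cv_P3 p q r : P3 p q r ->
  (p = q /\ p < r /\ cv p q r = gv p r) \/ (p = r /\ p < q /\ cv p q r = gv p q)
  \/ (q = r /\ q < p /\ cv p q r = gv q p).
Proof.
rewrite /cv /gv => [[[e l]|[[e l]|[e l]]]].
- by left; do 2!split=> //; congr logn; lia.
- by right; left; do 2!split=> //; congr logn; lia.
- by right; right; do 2!split=> //; congr logn; lia.
Qed.

Ltac wit := match goal with
 | |- context [gv ?a ?b] => match goal with
   | |- context [gv ?c ?d] => exists (gv a b), (gv c d);
        repeat split; solve [left; congruence | right; congruence]
   end end.

Ltac tri := match goal with
 | |- context [gv ?u ?v] => match goal with |- context [gv v ?w] =>
     have [[T1 T2]|[[T1 T2]|[T1 T2]]] := gtri (u := u) (v := v) (w := w) ltac:(lia) ltac:(lia); wit end end.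

Lemma four (ab ac ad bc bd cd : nat) :
  P3 ab bc ac -> P3 ab bd ad -> P3 ac cd ad -> P3 bc cd bd ->
  exists u v, (cv ab bc ac = u \/ cv ab bc ac = v) /\ (cv ab bd ad = u \/ cv ab bd ad = v)
    /\ (cv ac cd ad = u \/ cv ac cd ad = v) /\ (cv bc cd bd = u \/ cv bc cd bd = v).
Proof.
move=> /cv_P3 H1 /cv_P3 H2 /cv_P3 H3 /cv_P3 H4.
move: H1 H2 H3 H4.
move: (cv ab bc ac) (cv ab bd ad) (cv ac cd ad) (cv bc cd bd) => c1 c2 c3 c4 H1 H2 H3 H4.
(case: H1 => [[e1 [l1 E1]]|[[e1 [l1 E1]]|[e1 [l1 E1]]]];
case: H2 => [[e2 [l2 E2]]|[[e2 [l2 E2]]|[e2 [l2 E2]]]];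
case: H3 => [[e3 [l3 E3]]|[[e3 [l3 E3]]|[e3 [l3 E3]]]];
case: H4 => [[e4 [l4 E4]]|[[e4 [l4 E4]]|[e4 [l4 E4]]]];
try (exfalso; lia)).
all: subst; first [wit | tri].
Qed.

Definition Ct (x y z : nat) := cv (lv x y) (lv y z) (lv x z).
Lemma Ct12 x y z : Ct x y z = Ct y x z.
Proof. rewrite /Ct /cv (lvC y x) (lvC x z) (lvC y z); congr logn; lia. Qed.
Lemma Ct23 x y z : Ct x y z = Ct x z y.
Proof. rewrite /Ct /cv (lvC z y); congr logn; lia. Qed.

Lemma card3 n (x y z : 'I_n) : x != y -> y != z -> x != z -> #|[set x; y; z]| = 3.
Proof.
move=> xy yz xz.
by rewrite -setUA cardsU1 cards2 !inE yz (negbTE xy) (negbTE xz).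
Qed.

Definition val3 n (S : {set 'I_n}) : nat :=
  match enum S with [:: x; y; z] => Ct x y z | _ => 0 end.

Definition col k (kpos : 0 < k) n : colouring n k :=
  fun S => Ordinal (ltn_pmod (val3 S) kpos).

Lemma val3_set n (x y z : 'I_n) : x != y -> y != z -> x != z ->
  val3 [set x; y; z] = Ct x y z.
Proof.
move=> xy yz xz.
have := card3 xy yz xz; rewrite cardE /val3.
move: (enum_uniq [set x; y; z]) (mem_enum [set x; y; z]).
case: (enum _) => [|a [|b [|c [|? ?]]]] //= U M _.
have Ma := M a; have Mb := M b; have Mc := M c.
rewrite !inE !eqxx /= ?orbT in Ma Mb Mc.
move: U; rewrite /= !inE !negb_or => /and3P [/andP [ab ac] bc _].
move: (esym Ma) => /orP [/orP [] |] /eqP ea; move: (esym Mb) => /orP [/orP [] |] /eqP eb;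
move: (esym Mc) => /orP [/orP [] |] /eqP ec; subst; rewrite ?eqxx // in ab ac bc *;
first [ reflexivity | by rewrite Ct12 | by rewrite Ct23 | by rewrite Ct12 Ct23
      | by rewrite Ct23 Ct12 | by rewrite Ct12 Ct23 Ct12 ].
Qed.

Ltac perm_solve := first [ assumption | rewrite Ct12; assumption | rewrite Ct23; assumption
  | rewrite Ct12 Ct23; assumption | rewrite Ct23 Ct12; assumption
  | rewrite Ct12 Ct23 Ct12; assumption ].

Lemma no_tri k (kpos : 0 < k) n (S : {set 'I_n}) : ~ tricoloured (@col k kpos n) S.
Proof.
case=> S4 H3.
move: S4; rewrite cardE.
move: (enum_uniq S) (mem_enum S).
case: (enum _) => [|a [|b [|c [|d [|? ?]]]]] //= U M _.
move: U; rewrite /= !inE !negb_or => /and4P [/and3P [ab ac ad] /andP [bc bd] cd _].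
have [u [v [h1 [h2 [h3 h4]]]]] := four (lv_P3 ab bc ac) (lv_P3 ab bd ad)
   (lv_P3 ac cd ad) (lv_P3 bc cd bd).
have sub : [set @col k kpos n T | T in [set T in powerset S | #|T| == 3]]
   \subset [set Ordinal (ltn_pmod u kpos); Ordinal (ltn_pmod v kpos)].
  apply/subsetP => _ /imsetP [T HT ->].
  move: HT; rewrite !inE => /andP [TS T3].
  move: T3; rewrite cardE /col /val3.
  move: (enum_uniq T) (mem_enum T).
  case: (enum _) => [|p [|q [|r [|? ?]]]] //= UT MT _.
  move: UT; rewrite /= !inE !negb_or => /and3P [/andP [pq pr] qr _].
  have HS : forall t, t \in T -> (t == a) || ((t == b) || ((t == c) || (t == d))).
    move=> t tT; have := M t.
    by rewrite (subsetP TS t tT) !inE => ->.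
  have Hp := HS p; have Hq := HS q; have Hr := HS r.
  rewrite -!MT !inE !eqxx ?orbT in Hp Hq Hr.
  have : Ct p q r = u \/ Ct p q r = v.
    move: (Hp isT) => /orP [|/orP [|/orP []]] /eqP ep;
    move: (Hq isT) => /orP [|/orP [|/orP []]] /eqP eq;
    move: (Hr isT) => /orP [|/orP [|/orP []]] /eqP er; subst;
    rewrite ?eqxx // in pq pr qr; perm_solve.
  by case=> ->; rewrite eqxx ?orbT.
have := subset_leq_card sub; rewrite H3 cards2; by case: (_ != _).
Qed.

Lemma cover k (kpos : 0 < k) : covering_colouring (@col k kpos (2 ^ (2 ^ k))).
Proof.
move=> i x y xy.
set n := 2 ^ (2 ^ k) in x y xy *.
have hx := ltn_ord x; have hy := ltn_ord y.
have xy' : nat_of_ord x <> nat_of_ord y by move=> e; move/eqP: xy; apply; apply: val_inj.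
set d := (x - y) + (y - x).
have dpos : 0 < d by rewrite /d; lia.
have dn : d < 2 ^ (2 ^ k) by rewrite /d; rewrite -/n; lia.
set t := lv x y.
have tk : t < 2 ^ k.
  have td : 2 ^ t <= d by apply: dvdn_leq dpos (pfactor_dvdnn 2 d).
  by rewrite -(ltn_exp2l _ _ (isT : 1 < 2)); apply: leq_ltn_trans dn.
have hi : 2 * 2 ^ i <= 2 ^ k by rewrite -expnS leq_exp2l // ltn_ord.
set s := if t + 2 ^ i < 2 ^ k then t + 2 ^ i else t - 2 ^ i.
have [sk st ne] : [/\ s < 2 ^ k, (s - t) + (t - s) = 2 ^ i & s <> t].
  have := expn_gt0 2 i; rewrite /s; case: ifP => h; split; lia.
have hs : 2 * 2 ^ s <= n by rewrite -expnS leq_exp2l.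
have hs0 := expn_gt0 2 s.
set zv := if x + 2 ^ s < n then x + 2 ^ s else x - 2 ^ s.
have [zlt dz] : zv < n /\ (x - zv) + (zv - x) = 2 ^ s.
  by rewrite /zv; case: ifP => h; split; lia.
pose z := Ordinal zlt.
have lxz : lv x z = s by rewrite /lv /= dz pfactorK.
have xz : x != z.
  apply/eqP => e; have : (x - zv) + (zv - x) = 0 by rewrite -[zv]/(nat_of_ord z) -e; lia.
  by rewrite dz; lia.
have yz : y != z.
  apply/eqP => e; apply: ne; rewrite -lxz -e; by rewrite /t lvC.
have P := lv_P3 xy yz xz.
exists z; split; first exact: card3.
apply: val_inj; rewrite /= val3_set // /Ct -/t lxz.
rewrite lxz -/t in P.
rewrite /cv (_ : maxn t (maxn (lv y z) s) - minn t (minn (lv y z) s) = 2 ^ i).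
  by rewrite pfactorK // modn_small.
have ip : 0 < 2 ^ i by rewrite expn_gt0.
clearbody s t; change (lv (\val y) (\val z)) with (lv y z) in P; move: P; rewrite /P3; lia.
Qed.

Theorem lemma11 : forall k : nat, 1 <= k ->
  exists (n : nat) (c : colouring n k),
    3 <= n /\ covering_colouring c /\ forall S : {set 'I_n}, ~ tricoloured c S.
Proof.
move=> k kpos; exists (2 ^ (2 ^ k)), (@col k kpos (2 ^ (2 ^ k))).
split; last split.
- have : 2 ^ 1 <= 2 ^ k by rewrite leq_exp2l.
  rewrite -(leq_exp2l _ _ (isT : 1 < 2)) => h; apply: leq_trans h; by [].
- exact: cover.
- move=> S; exact: no_tri.
Qed.
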